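(* Let $R\ge1$, $\mathbf{x}$ a vector of pairwise distinct reals and $\mathbf{c}=(c_1,\dots,c_R)\in\mathbb{R}^R$ with $c_k\ne0$ for all $k$. Then the $R$ eigenvalues of $B(\mathbf{x},\mathbf{c})$ are pairwise distinct (each eigenvalue is simple).
   Context: $B(\mathbf{x},\mathbf{c})$ is the $R\times R$ matrix with entries $b_{m,m}=0$ and $b_{m,n}=\frac{c_mc_n}{x_m-x_n}$ for $m\ne n$. *)

(* Defs.v *)
From HB Require Import structures.
From mathcomp Require Import all_boot all_order all_algebra.
Set Implicit Arguments. Unset Strict Implicit. Unset Printing Implicit Defensive.
Import Order.TTheory GRing.Theory Num.Theory.
Local Open Scope ring_scope.

Definition Bmat (F : fieldType) (n : nat) (x c : 'I_n -> F) : 'M[F]_n :=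
  \matrix_(i, j) (if i == j then 0 else c i * c j / (x i - x j)).

(* Main.v *)
Require Import Defs.
From HB Require Import structures.
From mathcomp Require Import all_boot all_order all_algebra.
From mathcomp Require Import ring.
Set Implicit Arguments. Unset Strict Implicit. Unset Printing Implicit Defensive.
Import Order.TTheory GRing.Theory Num.Theory.
Local Open Scope ring_scope.
Local Open Scope sesquilinear_scope.

Section S.
Variables (C : numClosedFieldType) (n : nat) (x c : 'I_n -> C).
Hypotheses (xr : forall k, x k \is Num.real) (cr : forall k, c k \is Num.real)
  (xi : injective x) (c0 : forall k, c k != 0).

Lemma B_skew : (Bmat x c) ^t* = - Bmat x c.
Proof.
apply/matrixP => i j; rewrite !mxE.
have [eij|nij] := eqVneq i j; first by rewrite conjC0 oppr0.
rewrite conj_Creal; last by rewrite !rpredM ?rpredV ?rpredB.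
by rewrite -mulrN -invrN opprB (mulrC (c j)).
Qed.


Lemma Lpos (a : 'I_n -> C) (v : 'rV[C]_n) : (forall k, 0 < a k) ->
  \sum_k a k * (v 0 k * (v 0 k)^*) = 0 -> v = 0.
Proof.
move=> ha /psumr_eq0P h; apply/rowP => k; rewrite mxE.
have /eqP := h (fun i _ => mulr_ge0 (ltW (ha i)) (mul_conjC_ge0 _)) k isT.
rewrite mulf_eq0 (negbTE (lt0r_neq0 (ha k))) /=.
by rewrite mul_conjC_eq0 => /eqP.
Qed.

Lemma entry_diag (v : 'rV[C]_n) (d : 'rV[C]_n) :
  (v *m diag_mx d *m v ^t*) 0 0 = \sum_k d 0 k * (v 0 k * (v 0 k)^*).
Proof.
rewrite mul_mx_diag !mxE; apply: eq_bigr => k _; rewrite !mxE; ring.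
Qed.

Let B := Bmat x c.
Let cv : 'cV[C]_n := \col_k c k.
Let X : 'M[C]_n := diag_mx (\row_k x k).
Let D2 : 'M[C]_n := diag_mx (\row_k (c k * c k)).

Lemma comm_B : X *m B - B *m X = cv *m cv^T - D2.
Proof.
apply/matrixP => i j; rewrite /X mul_diag_mx mul_mx_diag !mxE big_ord1 !mxE.
have [eij|nij] := eqVneq i j.
  by rewrite eij !mulr0 !mul0r subrr mulr1n subrr.
rewrite mulr0n subr0.
have hx : x i - x j != 0 by rewrite subr_eq0; apply: contra nij => /eqP/xi ->.
by field.
Qed.

Lemma KL (v : 'rV[C]_n) lam : v *m B = lam *: v -> v *m cv = 0 -> v = 0.
Proof.
move=> hv hc.
set w := v ^t*.
have hBw : B *m w = - (lam^*) *: w.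
  have := congr1 (fun M : 'rV[C]_n => M ^t*) hv.
  rewrite /= trmx_mul map_mxM B_skew linearZ /= map_mxZ mulNmx => h.
  by rewrite -[B *m w]opprK h scaleNr.
have h1 : (lam + lam^*) *: (v *m w) = 0.
  have e1 : v *m B *m w = lam *: (v *m w) by rewrite hv -scalemxAl.
  have e2 : v *m B *m w = - (lam^*) *: (v *m w) by rewrite -mulmxA hBw -scalemxAr.
  by rewrite scalerDl -e1 e2 scaleNr addNr.
have hT : v *m (X *m B - B *m X) *m w = - (lam + lam^*) *: (v *m X *m w).
  rewrite mulmxBr mulmxBl !mulmxA -[v *m X *m B *m w]mulmxA hBw.
  rewrite -[v *m B]/(v *m B) hv -!scalemxAl -scalemxAr.
  by rewrite -scaleNr -scalerDl opprD addrC.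
have [hl|hl] := eqVneq (lam + lam^*) 0.
  move: hT; rewrite hl oppr0 scale0r comm_B mulmxBr mulmxBl mulmxA hc mul0mx.
  rewrite mul0mx sub0r => /eqP; rewrite oppr_eq0 => /eqP /(congr1 (fun M : 'M[C]_1 => M 0 0)).
  rewrite /w /D2 entry_diag [RHS]mxE => hs; apply: (Lpos _ hs) => k; rewrite mxE.
  by rewrite -{2}(conj_Creal (cr k)) mul_conjC_gt0.
move: h1 => /eqP; rewrite scaler_eq0 (negbTE hl) /= => /eqP.
have -> : v *m w = v *m diag_mx (\row_k 1) *m w.
  congr (_ *m _); apply/rowP => k; rewrite mul_mx_diag !mxE mulr1 //.
move=> /(congr1 (fun M : 'M[C]_1 => M 0 0)); rewrite entry_diag [RHS]mxE => hs; apply: (Lpos _ hs) => k.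
by rewrite mxE ltr01.
Qed.


Lemma main_sec : exists2 s : seq C, uniq s &
    (size s = n /\ char_poly (Bmat x c) = \prod_(z <- s) ('X - z%:P)).
Proof.
have Bn : B \is normalmx by apply/normalmxP; rewrite B_skew mulmxN mulNmx.
have hB := orthomx_spectralP Bn.
set P := spectralmx B in hB; set d := spectral_diag B in hB.
have Pu : P \is unitarymx := spectral_unitarymx B.
have Pi : P \in unitmx := unitarymx_unit Pu.
have hPB : P *m B = diag_mx d *m P.
  by rewrite {1}hB !mulmxA mulmxV // mul1mx.
pose p i := row i P.
have hp i : p i *m B = d 0 i *: p i.
  rewrite /p -row_mul hPB mul_diag_mx; apply/rowP => k; rewrite !mxE //.
have hdot i j : (p i *m (p j)^t*) 0 0 = (i == j)%:R.
  have /unitarymxP/matrixP/(_ i j) := Pu; rewrite !mxE => <-.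
  by apply: eq_bigr => k _; rewrite !mxE.
have inj_d : injective (fun i => d 0 i).
  move=> i j /= dij; apply/eqP; apply/negPn/negP => nij.
  pose a := (p j *m cv) 0 0; pose b := (p i *m cv) 0 0.
  pose v := a *: p i - b *: p j.
  have hv : v *m B = d 0 i *: v.
    by rewrite /v mulmxBl -!scalemxAl !hp dij !scalerA scalerBr !scalerA (mulrC a) (mulrC b).
  have hvc : v *m cv = 0.
    apply/matrixP => r s; rewrite !ord1 /v mulmxBl -!scalemxAl !mxE.
    by rewrite /a /b !mxE mulrC subrr.
  have v0 := KL hv hvc.
  have dv k : (v *m (p k)^t*) 0 0 = a * (i == k)%:R - b * (j == k)%:R.
    by rewrite /v mulmxBl -!scalemxAl !mxE -!hdot !mxE.
  have hb : b = 0.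
    by have := dv j; rewrite v0 mul0mx mxE eqxx (negbTE nij) mulr0 mulr1 sub0r => /eqP; rewrite eq_sym oppr_eq0 => /eqP.
  have hpi : p i *m cv = 0 by apply/matrixP => r s; rewrite !ord1 [RHS]mxE; exact: hb.
  have := hdot i i; rewrite (KL (hp i) hpi) mul0mx mxE eqxx => /eqP.
  by rewrite eq_sym oner_eq0.
exists [seq d 0 i | i <- enum 'I_n].
  by rewrite map_inj_uniq ?enum_uniq.
split; first by rewrite size_map size_enum_ord.
rewrite big_map big_enum /=.
have -> : char_poly (Bmat x c) = char_poly (diag_mx d).
  pose Q := map_mx (@polyC C) P; pose Qi := map_mx (@polyC C) (invmx P).
  have hQ : Qi *m Q = 1%:M by rewrite -map_mxM mulVmx // map_mx1.
  have hc : char_poly_mx (Bmat x c) = Qi *m char_poly_mx (diag_mx d) *m Q.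
    rewrite /char_poly_mx mulmxBr mulmxBl scalar_mxC -[_%:M *m Qi *m Q]mulmxA hQ mulmx1.
    by rewrite -!map_mxM -hB.
  rewrite /char_poly hc !det_mulmx mulrAC -det_mulmx hQ det1 mul1r //.
rewrite char_poly_trig ?diag_mx_is_trig //; apply: eq_bigr => i _.
by rewrite mxE eqxx mulr1n.
Qed.

End S.

Unset Implicit Arguments.
Local Close Scope sesquilinear_scope.

Theorem corollary1 (C : numClosedFieldType) (n : nat) (x c : 'I_n -> C) :
  (0 < n)%N ->
  (forall k, x k \is Num.real) -> (forall k, c k \is Num.real) ->
  injective x -> (forall k, c k != 0) ->
  exists2 s : seq C, uniq s &
    (size s = n /\ char_poly (Bmat x c) = \prod_(z <- s) ('X - z%:P)).
Proof. by move=> _ xr cr xi c0; apply: main_sec. Qed.
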